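(* Let $S=(v_1,\ldots,v_n)$ be an $(n,k)$-uframe, fix an index $i\in[n]$ with $|v_i|<1$, let $v\in\mathbb{R}^k$, and let $S'$ be obtained from $S$ by replacing $v_i$ with $v$. Then $S'$ is an $(n,k)$-frame and $$\det B_{S'}=\sqrt{\frac{1+|B_{S\setminus i}v_i|^2}{1+|B_{S\setminus i}v|^2}}.$$
   Context: An $(n,k)$-frame is an ordered $n$-tuple of vectors in $\mathbb{R}^k$ spanning $\mathbb{R}^k$. For a tuple $T=(w_j)$ of vectors in $\mathbb{R}^k$, $A_T=\sum_j w_j\otimes w_j=\sum_j w_jw_j^T$; if $A_T$ is positive definite, $B_T=A_T^{-1/2}$. An $(n,k)$-uframe is a frame $S$ with $A_S=I_k$. $S\setminus i$ denotes the tuple $(v_j)_{j\in[n],\,j\neq i}$. $|\cdot|$ is the Euclidean norm. *)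

(* Defs.v *)
From HB Require Import structures.
From mathcomp Require Import all_boot all_order all_algebra.
From Stdlib Require Import ClassicalEpsilon.
Set Implicit Arguments. Unset Strict Implicit. Unset Printing Implicit Defensive.
Import Order.TTheory GRing.Theory Num.Theory.
Local Open Scope ring_scope.

Definition vtuple (R : rcfType) (n k : nat) := 'I_n -> 'cV[R]_k.

Definition vnorm (R : rcfType) (k : nat) (x : 'cV[R]_k) : R :=
  Num.sqrt ((x^T *m x) 0 0).

Definition rows_of (R : rcfType) (n k : nat) (T : vtuple R n k) : 'M[R]_(n, k) :=
  \matrix_(j, l) T j l 0.

Definition is_frame (R : rcfType) (n k : nat) (T : vtuple R n k) : Prop :=
  row_full (rows_of T).

Definition A_of (R : rcfType) (n k : nat) (T : vtuple R n k) : 'M[R]_k :=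
  \sum_(j < n) (T j *m (T j)^T).

Definition is_uframe (R : rcfType) (n k : nat) (T : vtuple R n k) : Prop :=
  is_frame T /\ A_of T = 1%:M.

Definition pos_def (R : rcfType) (k : nat) (M : 'M[R]_k) : Prop :=
  M^T = M /\ forall x : 'cV[R]_k, x != 0 -> 0 < (x^T *m M *m x) 0 0.

(* A^{-1/2}: the (unique) positive definite B with B^2 = A^{-1}
   (meaningful when A is positive definite). *)
Definition inv_sqrt_mx (R : rcfType) (k : nat) (M : 'M[R]_k) : 'M[R]_k :=
  epsilon (inhabits 0) (fun B : 'M[R]_k => pos_def B /\ B *m B = invmx M).

Definition B_of (R : rcfType) (n k : nat) (T : vtuple R n k) : 'M[R]_k :=
  inv_sqrt_mx (A_of T).

Definition remove_at (R : rcfType) (n k : nat) (T : vtuple R n k) (i : 'I_n)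
  : vtuple R n.-1 k := fun j => T (lift i j).

Definition replace_at (R : rcfType) (n k : nat) (T : vtuple R n k) (i : 'I_n)
  (v : 'cV[R]_k) : vtuple R n k := fun j => if j == i then v else T j.

(* Main.v *)
Require Import Defs.
From mathcomp Require Import all_boot all_order all_algebra.
From mathcomp Require Import complex spectral sesquilinear.
From mathcomp Require Import ring lra.
From Stdlib Require Import ClassicalEpsilon.
Import Order.TTheory GRing.Theory Num.Theory.
Set Implicit Arguments. Unset Strict Implicit.
Local Open Scope ring_scope.
Local Open Scope sesquilinear_scope.

Lemma toC_real (R : rcfType) (x : R) : (real_complex R x)^* = real_complex R x.
Proof. by apply: conj_Creal; rewrite complex_real. Qed.


Lemma quadC (R : rcfType) k (M : 'M[R]_k) (z : 'rV[R[i]]_k) :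
  M^T = M ->
  (z *m map_mx (real_complex R) M *m z ^t* ) 0 0 =
  real_complex R (((map_mx (@complex.Re R) z) *m M *m (map_mx (@complex.Re R) z)^T) 0 0 +
   ((map_mx (@complex.Im R) z) *m M *m (map_mx (@complex.Im R) z)^T) 0 0).
Proof.
move=> MT.
set X := map_mx _ z; set Y := map_mx _ z.
have zE : z = map_mx (real_complex R) X + 'i *: map_mx (real_complex R) Y.
  by apply/matrixP => a b; rewrite !mxE [LHS]complexE.
have ztE : z ^t* = map_mx (real_complex R) X^T - 'i *: map_mx (real_complex R) Y^T.
  apply/matrixP => a b; rewrite zE !mxE rmorphD rmorphM /= conjCi !toC_real.
  by rewrite mulNr.
rewrite ztE {1}zE !mulmxDl !mulmxBr -!scalemxAl -!scalemxAr -!map_mxM.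
have XY : (Y *m M *m X^T) 0 0 = (X *m M *m Y^T) 0 0.
  have <- : (Y *m M *m X^T)^T 0 0 = (Y *m M *m X^T) 0 0 by rewrite mxE.
  by rewrite !trmx_mul !trmxK MT mulmxA.
rewrite !mxE.
have E : forall (A : 'rV[R]_k) (B : 'cV[R]_k), \sum_j A 0 j * B j 0 = (A *m B) 0 0.
  by move=> A B; rewrite mxE.
rewrite !E XY rmorphD /=.
rewrite mulrA -expr2 sqrCi mulN1r opprK.
by rewrite addrA subrK.
Qed.

Lemma sqn_sum (R : rcfType) k (x : 'cV[R]_k) :
  (x^T *m x) 0 0 = \sum_l x l 0 ^+ 2.
Proof. by rewrite !mxE; apply: eq_bigr => l _; rewrite !mxE expr2. Qed.

Lemma sqn_ge0 (R : rcfType) k (x : 'cV[R]_k) : 0 <= (x^T *m x) 0 0.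
Proof. by rewrite sqn_sum; apply: sumr_ge0 => l _; apply: sqr_ge0. Qed.

Lemma sqn_gt0 (R : rcfType) k (x : 'cV[R]_k) : x != 0 -> 0 < (x^T *m x) 0 0.
Proof.
move=> xn0; rewrite lt_def sqn_ge0 andbT; apply: contra xn0.
rewrite sqn_sum psumr_eq0; last by move=> l _; apply: sqr_ge0.
move=> /allP H; apply/eqP/matrixP => l j; rewrite ord1 mxE.
by have := H l (mem_index_enum _); rewrite sqrf_eq0 => /eqP.
Qed.

Lemma vnorm_sq (R : rcfType) k (x : 'cV[R]_k) : vnorm x ^+ 2 = (x^T *m x) 0 0.
Proof. by rewrite /vnorm sqr_sqrtr // sqn_ge0. Qed.

Lemma posq (R : rcfType) k (M : 'M[R]_k) : pos_def M -> forall X : 'rV[R]_k,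
  0 <= (X *m M *m X^T) 0 0 /\ (X != 0 -> 0 < (X *m M *m X^T) 0 0).
Proof.
case=> _ Mpos X.
have XT : X != 0 -> 0 < (X *m M *m X^T) 0 0.
  move=> Xn0; have := Mpos X^T; rewrite trmxK; apply.
  by apply: contra Xn0 => /eqP/(congr1 trmx); rewrite trmxK trmx0 => ->.
split=> //; have [->|/XT/ltW//] := eqVneq X 0.
by rewrite mul0mx mul0mx mxE.
Qed.

Lemma realspec (R : rcfType) k (M : 'M[R]_k) : pos_def M ->
  exists (P : 'M[R[i]]_k) (r : 'rV[R]_k),
    P \is unitarymx /\ (forall j, 0 < r 0 j) /\
    map_mx (real_complex R) M = invmx P *m diag_mx (map_mx (real_complex R) r) *m P.
Proof.
move=> Mpd; have [MT _] := Mpd.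
set Mc := map_mx (real_complex R) M.
have McT : Mc ^t* = Mc.
  by apply/matrixP => a b; rewrite !mxE toC_real -[in RHS]MT mxE.
have Mn : Mc \is normalmx by apply/normalmxP; rewrite McT.
have spec := orthomx_spectralP Mn.
set P := spectralmx Mc in spec; set d := spectral_diag Mc in spec.
have Pu : P \is unitarymx by apply: spectral_unitarymx.
have PU := unitarymx_unit Pu.
have PPt : P *m P ^t* = 1%:M by apply/unitarymxP.
have Dform : diag_mx d = P *m Mc *m P ^t*.
  by rewrite -invmx_unitary // spec !mulmxA mulmxV // mul1mx -mulmxA mulmxV // mulmx1.
have dpos : forall j, exists2 r, 0 < r & d 0 j = real_complex R r.
  move=> j.
  have -> : d 0 j = (row j P *m Mc *m (row j P) ^t*) 0 0.
    have -> : d 0 j = diag_mx d j j by rewrite mxE eqxx mulr1n.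
    rewrite Dform -row_mul !mxE; apply: eq_bigr => l _; rewrite !mxE //.
  set z := row j P.
  have zn0 : z != 0.
    apply/negP => /eqP z0.
    have : (P *m P ^t*) j j = (z *m z ^t*) 0 0.
      by rewrite !mxE; apply: eq_bigr => l _; rewrite !mxE.
    by rewrite PPt z0 mul0mx !mxE eqxx /= => /eqP; rewrite oner_eq0.
  rewrite quadC //.
  set X := map_mx _ z; set Y := map_mx _ z.
  have [hX1 hX2] := posq Mpd X; have [hY1 hY2] := posq Mpd Y.
  eexists; last reflexivity.
  have [X0|Xn0] := eqVneq X 0; last by apply: ltr_pwDl => //; apply: hX2.
  have [Y0|Yn0] := eqVneq Y 0; last by apply: ltr_pwDr => //; apply: hY2.
  exfalso; move/negP: zn0; apply; apply/eqP/matrixP => a b.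
  have hx : complex.Re (z a b) = 0.
    by have := congr1 (fun A : 'rV[R]_k => A a b) X0; rewrite !mxE.
  have hy : complex.Im (z a b) = 0.
    by have := congr1 (fun A : 'rV[R]_k => A a b) Y0; rewrite !mxE.
  by rewrite [RHS]mxE [LHS]complexE hx hy !rmorph0 mulr0 addr0.
pose r : 'rV[R]_k := \row_j complex.Re (d 0 j).
exists P; exists r; split; first exact: Pu. split.
  by move=> j; rewrite /r mxE; have [r' r0 ->] := dpos j.
have rd : map_mx (real_complex R) r = d.
  apply/matrixP => a j; rewrite ord1 !mxE; by have [r' r0 ->] := dpos j.
rewrite rd; exact: spec.
Qed.

Lemma interp (R : fieldType) (f : R -> R) (s : seq R) :
  exists p : {poly R}, forall x, x \in s -> p.[x] = f x.
Proof.
elim: s => [|y s [p hp]]; first by exists 0.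
have [ys|yns] := boolP (y \in s).
  by exists p => x; rewrite inE => /orP[/eqP->|/hp//]; apply: hp.
set q := \prod_(a <- s) ('X - a%:P).
have qy : q.[y] != 0 by rewrite -/(root q y) root_prod_XsubC.
exists (p + ((f y - p.[y]) / q.[y]) *: q) => x; rewrite inE hornerD hornerZ.
case/orP => [/eqP->|xs]; first by rewrite divfK // addrC subrK.
have : root q x by rewrite root_prod_XsubC.
by rewrite /root => /eqP ->; rewrite mulr0 addr0 hp.
Qed.

Lemma pd_det (R : rcfType) k (M : 'M[R]_k) : pos_def M -> 0 < \det M.
Proof.
move=> Mpd; have [P [r [Pu [rpos Mc]]]] := realspec Mpd.
have PU := unitarymx_unit Pu.
have : real_complex R (\det M) = \det (map_mx (real_complex R) M) by rewrite det_map_mx.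
rewrite Mc !det_mulmx det_diag det_inv mulrC mulrA mulrV; last by rewrite -unitmxE.
rewrite mul1r.
have -> : \prod_i (map_mx (real_complex R) r) 0 i = real_complex R (\prod_i r 0 i).
  by rewrite rmorph_prod; apply: eq_bigr => i _; rewrite mxE.
move/complexI => ->; apply: prodr_gt0 => i _; exact: rpos.
Qed.

Lemma pd_unit (R : rcfType) k (M : 'M[R]_k) : pos_def M -> M \in unitmx.
Proof. by move/pd_det => d; rewrite unitmxE unitfE gt_eqF. Qed.

Lemma horner_tr (R : comNzRingType) k (M : 'M[R]_k.+1) (p : {poly R}) :
  M^T = M -> (horner_mx M p)^T = horner_mx M p.
Proof.
move=> MT; elim/poly_ind: p => [|p c IH]; first by rewrite rmorph0 trmx0.
rewrite rmorphD rmorphM /= horner_mx_X horner_mx_C linearD /= tr_scalar_mx.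
rewrite -mulmxE trmx_mul IH MT; congr (_ + _).
by have := comm_horner_mx p (erefl (M *m M)).
Qed.

Lemma diag_conj (C : comNzRingType) k (P Q : 'M[C]_k) (a b : 'rV[C]_k) :
  P *m Q = 1%:M ->
  (Q *m diag_mx a *m P) *m (Q *m diag_mx b *m P) =
  Q *m diag_mx (\row_j (a 0 j * b 0 j)) *m P.
Proof.
move=> PQ; rewrite !mulmxA -[Q *m _ *m P *m Q]mulmxA PQ mulmx1.
congr (_ *m _); rewrite -mulmxA; congr (_ *m _).
by apply/matrixP => i j; rewrite mul_diag_mx !mxE mulrnAr.
Qed.

Lemma pd_invsqrt (R : rcfType) k (M : 'M[R]_k) : pos_def M ->
  exists B, pos_def B /\ B *m B = invmx M.
Proof.
case: k M => [|k] M Mpd.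
  exists 0; split; last by apply/matrixP => -[].
  split; first by rewrite trmx0.
  by move=> x /eqP []; apply/matrixP => -[].
have [MT _] := Mpd; have MU := pd_unit Mpd.
have [P [r [Pu [rpos Mc]]]] := realspec Mpd.
have PU := unitarymx_unit Pu.
pose f (x : R) := (Num.sqrt (Num.sqrt x))^-1.
have [p hp] := interp f [seq r 0 j | j <- enum 'I_k.+1].
set h := horner_mx M p.
set g := \row_j f (r 0 j).
have hmap : map_mx (real_complex R) h =
    invmx P *m diag_mx (map_mx (real_complex R) g) *m P.
  have HU := horner_mx_uconjC (map_poly (real_complex R) p)
     (diag_mx (map_mx (real_complex R) r)) PU.
  rewrite -Mc in HU.
  rewrite /h map_horner_mx HU horner_mx_diag.
  have E : map_mx (horner (map_poly (real_complex R) p)) (map_mx (real_complex R) r)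
           = map_mx (real_complex R) g.
    apply/matrixP => a j.
    rewrite ord1 !mxE horner_map hp //; apply: map_f; exact: mem_enum.
  by rewrite E.
have PQ : P *m invmx P = 1%:M by rewrite mulmxV.
have h4 : h *m h *m h *m h *m M = 1%:M.
  apply: (@map_mx_inj _ _ (real_complex R)).
  rewrite map_mx1 !map_mxM hmap Mc !diag_conj //.
  rewrite -[RHS](mulVmx PU); congr (_ *m _).
  rewrite -[RHS]mulmx1 -diag_const_mx; congr (_ *m diag_mx _).
  apply/matrixP => a j; rewrite ord1 !mxE /f.
  have r0 := rpos j; set x := r 0 j in r0 *.
  rewrite -!rmorphM /= -[1]/(real_complex R 1); congr (real_complex R _).
  have s0 : 0 < Num.sqrt x by rewrite sqrtr_gt0.
  have s1 : 0 < Num.sqrt (Num.sqrt x) by rewrite sqrtr_gt0.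
  have e1 : Num.sqrt (Num.sqrt x) ^+ 2 = Num.sqrt x by rewrite sqr_sqrtr // ltW.
  have e2 : Num.sqrt x ^+ 2 = x by rewrite sqr_sqrtr // ltW.
  set y := Num.sqrt (Num.sqrt x) in s1 e1 *.
  have -> : x = y ^+ 4 by rewrite -e2 -e1 -exprM.
  have yn0 : y != 0 by rewrite gt_eqF.
  by field.
have hU : h \in unitmx.
  have e : h *m (h *m h *m h *m M) = 1%:M by rewrite !mulmxA.
  by have [] := mulmx1_unit e.
have hT : h^T = h by apply: horner_tr.
exists (h *m h); split; last first.
  by rewrite -[LHS]mulmx1 -(mulmxV MU) !mulmxA h4 mul1mx.
split; first by rewrite trmx_mul hT.
move=> x xn0.
have -> : x^T *m (h *m h) *m x = (h *m x)^T *m (h *m x).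
  by rewrite trmx_mul hT !mulmxA.
apply: sqn_gt0; apply: contra xn0 => /eqP hx.
by rewrite -(mulKmx hU x) hx mulmx0.
Qed.

Lemma inv_sqrt_spec (R : rcfType) k (M : 'M[R]_k) : pos_def M ->
  pos_def (inv_sqrt_mx M) /\ inv_sqrt_mx M *m inv_sqrt_mx M = invmx M.
Proof.
move=> Mpd; rewrite /inv_sqrt_mx.
by apply: (epsilon_spec (inhabits 0) (fun B => pos_def B /\ B *m B = invmx M)); apply: pd_invsqrt.
Qed.

Lemma det_inv_sqrt (R : rcfType) k (M : 'M[R]_k) : pos_def M ->
  \det (inv_sqrt_mx M) = Num.sqrt (\det M)^-1.
Proof.
move=> Mpd; have [Bpd BB] := inv_sqrt_spec Mpd.
have dpos := pd_det Bpd.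
by rewrite -det_inv -BB det_mulmx -expr2 sqrtr_sqr ger0_norm // ltW.
Qed.

Lemma det1_rank1 (R : comNzRingType) k (a b : 'cV[R]_k) :
  \det (1%:M + a *m b^T) = 1 + (b^T *m a) 0 0.
Proof.
pose L : 'M[R]_(k + 1) := block_mx 1%:M 0 b^T 1%:M.
pose X : 'M[R]_(k + 1) := block_mx 1%:M a (- b^T) 1%:M.
have dL : \det L = 1 by rewrite det_lblock !det1 mulr1.
have e1 : L *m X = block_mx 1%:M a 0 (1%:M + b^T *m a).
  rewrite /L /X mulmx_block !mul1mx !mul0mx !addr0 !mulmx1.
  by rewrite subrr addrC.
have e2 : X *m L = block_mx (1%:M + a *m b^T) a 0 1%:M.
  by rewrite /L /X mulmx_block !mul1mx !mulmx0 !mulmx1 !add0r addNr.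
have := congr1 determinant e1; have := congr1 determinant e2.
rewrite !det_mulmx !det_ublock dL !det1 mulr1 !mul1r => <- ->.
by rewrite det_mx11 mulr1 !mxE.
Qed.

Lemma det_rank1 (R : fieldType) k (C : 'M[R]_k) (v : 'cV[R]_k) : C \in unitmx ->
  \det (C + v *m v^T) = \det C * (1 + (v^T *m invmx C *m v) 0 0).
Proof.
move=> CU.
have -> : C + v *m v^T = C *m (1%:M + (invmx C *m v) *m v^T).
  by rewrite mulmxDr mulmx1 !mulmxA mulmxV // mul1mx.
by rewrite det_mulmx det1_rank1 mulmxA.
Qed.

Lemma rows_A (R : rcfType) n k (T : vtuple R n k) :
  (rows_of T)^T *m rows_of T = A_of T.
Proof.
apply/matrixP => l m; rewrite /A_of summxE !mxE; apply: eq_bigr => j _.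
by rewrite !mxE big_ord1 !mxE.
Qed.

Lemma dot_sum (R : rcfType) k (u x : 'cV[R]_k) :
  (u^T *m x) 0 0 = \sum_l u l 0 * x l 0.
Proof. by rewrite !mxE; apply: eq_bigr => l _; rewrite !mxE. Qed.

Lemma cauchy_schwarz (R : rcfType) k (u x : 'cV[R]_k) :
  (u^T *m x) 0 0 ^+ 2 <= (u^T *m u) 0 0 * (x^T *m x) 0 0.
Proof.
rewrite !dot_sum.
set a := \sum_l u l 0 * u l 0; set b := \sum_l x l 0 * x l 0.
set c := \sum_l u l 0 * x l 0.
have E : \sum_l (a * x l 0 - c * u l 0) ^+ 2 = a * (a * b - c ^+ 2).
  rewrite (eq_bigr (fun l => a ^+ 2 * (x l 0 * x l 0) - (2 * a * c) * (u l 0 * x l 0)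
      + c ^+ 2 * (u l 0 * u l 0))); last by move=> l _; ring.
  rewrite big_split sumrB /= -!mulr_sumr -/a -/b -/c; ring.
have a0 : 0 <= a by apply: sumr_ge0 => l _; rewrite -expr2 sqr_ge0.
have H : 0 <= a * (a * b - c ^+ 2) by rewrite -E; apply: sumr_ge0 => l _; apply: sqr_ge0.
have [az|ap] := eqVneq a 0.
  have u0 : forall l, u l 0 = 0.
    move=> l; move/eqP: az; rewrite /a psumr_eq0; last by move=> j _; rewrite -expr2 sqr_ge0.
    by move=> /allP /(_ l (mem_index_enum _)); rewrite -expr2 sqrf_eq0 => /eqP.
  have -> : c = 0 by rewrite /c big1 // => l _; rewrite u0 mul0r.
  by rewrite az expr0n mul0r.
have apos : 0 < a by rewrite lt_def ap a0.
by move: H; rewrite pmulr_rge0 // subr_ge0 mulrC.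
Qed.

Lemma A_remove (R : rcfType) n k (S : vtuple R n k) (i : 'I_n) :
  A_of S = S i *m (S i)^T + A_of (remove_at S i).
Proof. by rewrite /A_of (bigD1_ord i). Qed.

Lemma A_replace (R : rcfType) n k (S : vtuple R n k) (i : 'I_n) v :
  A_of (replace_at S i v) = v *m v^T + A_of (remove_at S i).
Proof.
rewrite /A_of (bigD1_ord i) //= /replace_at eqxx; congr (_ + _).
by apply: eq_bigr => j _; rewrite eq_sym (negPf (neq_lift i j)).
Qed.

Lemma quad11 (R : rcfType) k (x u : 'cV[R]_k) :
  (x^T *m (u *m u^T) *m x) 0 0 = (u^T *m x) 0 0 ^+ 2.
Proof.
rewrite mulmxA -mulmxA -[x^T *m u]trmxK trmx_mul trmxK.
rewrite [in LHS]mxE big_ord1 expr2; congr (_ * _); by rewrite mxE.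
Qed.

Unset Implicit Arguments.

Theorem lemma5 (R : rcfType) (n k : nat) (S : vtuple R n k) (i : 'I_n)
  (v : 'cV[R]_k) :
  is_uframe S -> vnorm (S i) < 1 ->
  is_frame (replace_at S i v) /\
  \det (B_of (replace_at S i v)) =
    Num.sqrt ((1 + vnorm (B_of (remove_at S i) *m S i) ^+ 2) /
              (1 + vnorm (B_of (remove_at S i) *m v) ^+ 2)).
Proof.
move=> [_ AS] Sn.
have sub00 : forall A B : 'M[R]_1, (A - B) 0 0 = A 0 0 - B 0 0.
  by move=> A B; rewrite !mxE.
have add00 : forall A B : 'M[R]_1, (A + B) 0 0 = A 0 0 + B 0 0.
  by move=> A B; rewrite !mxE.
set u := S i.
set C := A_of (remove_at S i).
set B0 := B_of (remove_at S i).
have AC : u *m u^T + C = 1%:M by rewrite -AS (A_remove S i).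
have CE : C = 1%:M - u *m u^T by rewrite -AC addrC addKr.
have uu : (u^T *m u) 0 0 < 1.
  by move: Sn; rewrite /vnorm -{1}sqrtr1 ltr_sqrt.
have CT : C^T = C by rewrite CE linearB /= tr_scalar_mx trmx_mul trmxK.
have Cpd : pos_def C.
  split=> // x xn0.
  rewrite CE mulmxBr mulmxBl mulmx1 sub00 quad11 subr_gt0.
  apply: (le_lt_trans (cauchy_schwarz u x)).
  by rewrite gtr_pMl // sqn_gt0.
have CU := pd_unit Cpd.
have Mpd : pos_def (A_of (replace_at S i v)).
  rewrite A_replace; split.
    by rewrite linearD /= trmx_mul trmxK CT.
  move=> x xn0; rewrite mulmxDr mulmxDl add00 quad11.
  have h1 := sqr_ge0 ((v^T *m x) 0 0); have h2 := Cpd.2 x xn0.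
  lra.
have MU := pd_unit Mpd.
split.
  rewrite /is_frame /row_full eqn_leq rank_leq_col /=.
  have := mxrankM_maxr (rows_of (replace_at S i v))^T (rows_of (replace_at S i v)).
  by rewrite rows_A (mxrank_unit MU).
rewrite /B_of det_inv_sqrt // A_replace addrC det_rank1 // -/C -/B0.
have [B0pd B0B] := inv_sqrt_spec Cpd.
have nv : forall w, (w^T *m invmx C *m w) 0 0 = vnorm (B0 *m w) ^+ 2.
  move=> w; rewrite vnorm_sq trmx_mul B0pd.1 -B0B !mulmxA //.
have d1 : \det C * (1 + vnorm (B0 *m u) ^+ 2) = 1.
  by rewrite -nv -det_rank1 // addrC AC det1.
set nu := vnorm (B0 *m u) ^+ 2 in d1 *.
have nu0 : 1 + nu != 0 by rewrite gt_eqF // ltr_pwDl // sqr_ge0.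
have dC : \det C = (1 + nu)^-1 by apply: (mulIf nu0); rewrite d1 mulVf.
by rewrite nv dC invfM invrK.
Qed.
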